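(* Let $\Gamma$ be a group, $\alpha\in\mathrm{Aut}(\Gamma)$ and $\omega(g,h)=\alpha(g)$. Viewing elements $a\in K(\omega)$ as maps $\mathbb Q_2\to\Gamma$ via $a(x):=\alpha^{|u|}(a(u))$ for $x=u00\cdots$, for all $v\in V$, $a\in K(\omega)$ and $x\in\mathbb Q_2$ we have $$\pi(v)(a)(x)=\alpha^{-\log_2(v'(v^{-1}x))}\big(a(v^{-1}x)\big).$$
   Context: $\{0,1\}^*$ denotes the finite words over $\{0,1\}$ (including the empty word), $|u|$ the length; $\mathfrak C=\{0,1\}^{\mathbb N}$; $\mathbb Q_2\subset\mathfrak C$ is the set of eventually-zero sequences $u00\cdots$ ($u\in\{0,1\}^*$). The value $\alpha^{|u|}(a(u))$ does not depend on the choice of $u$ with $x=u00\cdots$, and $a\mapsto(x\mapsto a(x))$ is an isomorphism $K(\omega)\to\prod_{\mathbb Q_2}\Gamma$. A finite complete prefix code is a finite set $\{t_1,\dots,t_n\}\subset\{0,1\}^*$ such that every $x\in\mathfrak C$ has exactly one $t_i$ as prefix. Thompson's group $V$ is the group of homeomorphisms $v$ of $\mathfrak C$ for which there exist finite complete prefix codes $\{t_i\},\{s_i\}$ and a permutation $\sigma$ with $v(t_iw)=s_{\sigma(i)}w$ for all $i$, $w\in\mathfrak C$; for such a representation and $y\in\mathfrak C$ with prefix $t_i$, the slope is $v'(y):=2^{|t_i|-|s_{\sigma(i)}|}$. $K(\omega)$ is the group of maps $a:\{0,1\}^*\to\Gamma$ with $a(u)=\omega(a(u0),a(u1))$, and $V$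 acts on it by $\pi(v)(a)(s_{\sigma(i)}u)=a(t_iu)$ for all $i$, $u\in\{0,1\}^*$ (this determines $\pi(v)(a)\in K(\omega)$ uniquely). *)

(* Defs.v *)
From mathcomp Require Import all_boot monoid ssralg ssrint.
Set Implicit Arguments. Unset Strict Implicit. Unset Printing Implicit Defensive.

(* Finite words over {0,1}: [seq bool] (false = 0, true = 1).
   Cantor space C = {0,1}^N : [nat -> bool]. *)
Definition word := seq bool.
Definition cantor := nat -> bool.

Definition wcat (u : word) (w : cantor) : cantor :=
  fun n => if n < size u then nth false u n else w (n - size u).

(* u00... : the eventually-zero sequence determined by u (elements of Q_2) *)
Definition ezero (u : word) : cantor := wcat u (fun _ => false).

Definition is_prefix (u : word) (x : cantor) : bool :=
  all (fun i => nth false u i == x i) (iota 0 (size u)).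

Definition complete_prefix_code (ts : seq word) : Prop :=
  forall x : cantor, exists! i, i < size ts /\ is_prefix (nth [::] ts i) x.

(* A representation of v in Thompson's group V: a list of pairs
   (t_i, s_{sigma(i)}) such that {t_i} and {s_sigma(i)} are finite complete
   prefix codes, and v (t_i w) = s_sigma(i) w for all i and w. *)
Definition V_rep (v : cantor -> cantor) (R : seq (word * word)) : Prop :=
  [/\ complete_prefix_code (map fst R),
      complete_prefix_code (map snd R) &
      forall p w, p \in R -> v (wcat p.1 w) = wcat p.2 w].

Definition rep_pair (R : seq (word * word)) (y : cantor) : word * word :=
  nth ([::], [::]) R (find (fun p => is_prefix p.1 y) R).

(* log_2 of the slope v'(y) = 2^(|t_i| - |s_sigma(i)|), t_i the prefix of y *)
Definition log2_slope (R : seq (word * word)) (y : cantor) : int :=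
  (size (rep_pair R y).1)%:Z - (size (rep_pair R y).2)%:Z.

Definition autpow (G : Type) (alpha alphai : G -> G) (n : int) : G -> G :=
  match n with
  | Posz k => iter k alpha
  | Negz k => iter k.+1 alphai
  end.

Definition inK (G : Type) (omega : G -> G -> G) (a : word -> G) : Prop :=
  forall u, a u = omega (a (rcons u false)) (a (rcons u true)).

(* b = pi(v)(a) via the representation R: b(s_sigma(i) u) = a(t_i u) *)
Definition is_pi (G : Type) (omega : G -> G -> G) (R : seq (word * word))
  (a b : word -> G) : Prop :=
  inK omega b /\ forall p u, p \in R -> b (p.2 ++ u) = a (p.1 ++ u).

(* value of a in K(omega) at x = u00... in Q_2 : alpha^{|u|}(a(u)) *)
Definition Kval (G : Type) (alpha : G -> G) (a : word -> G) (u : word) : G :=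
  iter (size u) alpha (a u).

(* Main.v *)
Require Import Defs.
From mathcomp Require Import all_boot monoid ssralg ssrint.
From mathcomp Require Import zify.
From Stdlib Require Import FunctionalExtensionality.

Lemma ezeroE u n : ezero u n = nth false u n.
Proof.
rewrite /ezero /wcat; case: ifP => // /negbT; rewrite -leqNgt => h.
by rewrite nth_default.
Qed.

Lemma prefixE p y : is_prefix p y -> forall n, n < size p -> nth false p n = y n.
Proof.
move=> /allP H n Hn; apply/eqP; apply: H; by rewrite mem_iota add0n.
Qed.

Lemma Kval_pad (G : Type) (alpha : G -> G) (a : word -> G)
  (Ha : inK (fun g h => alpha g) a) u k :
  Kval alpha a (u ++ nseq k false) = Kval alpha a u.
Proof.
elim: k => [|k IH]; first by rewrite cats0.
rewrite -addn1 nseqD catA cats1 -IH.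
rewrite /Kval size_rcons iterSr; congr iter; by rewrite -Ha.
Qed.

Lemma Kval_eq (G : Type) (alpha : G -> G) (a : word -> G)
  (Ha : inK (fun g h => alpha g) a) u1 u2 :
  (forall n, nth false u1 n = nth false u2 n) -> Kval alpha a u1 = Kval alpha a u2.
Proof.
wlog le : u1 u2 / size u1 <= size u2.
  move=> W E; case: (leqP (size u1) (size u2)) => h; first exact: W.
  symmetry; apply: W => //; exact: ltnW.
move=> E.
have -> : u2 = u1 ++ nseq (size u2 - size u1) false.
  apply: (@eq_from_nth _ false); first by rewrite size_cat size_nseq; lia.
  move=> i _; rewrite -E nth_cat; case: ifP => // /negbT; rewrite -leqNgt => h.
  rewrite nth_default // nth_nseq; by case: ifP.
by rewrite Kval_pad.
Qed.

Lemma autpow_iter (G : Type) (alpha alphai : G -> G) (alphaK : cancel alpha alphai)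
  k m j g :
  autpow alpha alphai (k%:Z - m%:Z)%R (iter (m + j) alpha g) = iter (k + j) alpha g.
Proof.
case: (leqP m k) => h.
  have -> : (k%:Z - m%:Z)%R = Posz (k - m) by rewrite -subzn.
  by rewrite /= -iterD; congr iter; lia.
have -> : m + j = (m - k) + (k + j) by lia.
have -> : (k%:Z - m%:Z)%R = Negz (m - k).-1.
  rewrite NegzE prednK ?subn_gt0 //; rewrite -GRing.opprB subzn //; exact: ltnW.
have : 0 < m - k by rewrite subn_gt0.
case: (m - k) => [//|d] _; rewrite /autpow iterD.
elim: d.+1 => // n IH; by rewrite iterSr [iter n.+1 alpha _]iterS alphaK.
Qed.

Theorem mainTheorem7
  (Gamma : groupType) (alpha alphai : Gamma -> Gamma)
  (alpha_morph : monoid_morphism alpha)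
  (alphaK : cancel alpha alphai) (alphaiK : cancel alphai alpha)
  (v : cantor -> cantor) (R : seq (word * word)) (HR : V_rep v R)
  (a b : word -> Gamma)
  (Ha : inK (fun g h => alpha g) a)
  (Hb : is_pi (fun g h => alpha g) R a b)
  (u : word) (y : cantor) (Hy : v y = ezero u) :
  exists u' : word, y = ezero u' /\
    Kval alpha b u =
    autpow alpha alphai (- log2_slope R y)%R (Kval alpha a u').
Proof.
case: HR => C1 _ Hv; case: Hb => HbK Hb.
have hasR : has (fun p : word * word => is_prefix p.1 y) R.
  case: (C1 y) => i [[Hi Hp] _]; apply/hasP.
  exists (nth ([::],[::]) R i); first by apply: mem_nth; rewrite size_map in Hi.
  by rewrite -(nth_map _ [::]) // -(size_map fst).
set p := rep_pair R y.
have pR : p \in R by apply: mem_nth; rewrite -has_find.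
have pp : is_prefix p.1 y by apply: (nth_find ([::],[::]) hasR).
set w := fun n => y (n + size p.1).
have yE : y = wcat p.1 w.
  apply: functional_extensionality => n; rewrite /wcat /w.
  case: ifP => h; first by rewrite (@prefixE _ _ pp n h).
  by rewrite subnK // leqNgt h.
have vy := Hv p w pR; rewrite -yE Hy in vy.
set z := drop (size p.2) u.
have wE : forall n, w n = nth false z n.
  move=> n; rewrite nth_drop addnC.
  have := f_equal (fun f => f (n + size p.2)) vy; rewrite /= ezeroE /wcat.
  by rewrite ltnNge leq_addl /= addnK => ->.
have catE : forall q n, wcat q w n = nth false (q ++ z) n.
  move=> q n; rewrite /wcat nth_cat; case: ifP => // _; exact: wE.
exists (p.1 ++ z); split.
  apply: functional_extensionality => n; by rewrite {1}yE catE ezeroE.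
rewrite (@Kval_eq _ _ _ HbK u (p.2 ++ z)); last first.
  move=> n; by rewrite -ezeroE vy catE.
rewrite /Kval Hb // !size_cat /log2_slope -/p GRing.opprB.
by rewrite autpow_iter.
Qed.
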